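(* Let $n$ be a positive integer such that every component of $2n+1$ is greater than $54$. Then there exists an $(80n+40,[2^n,6^n,18^n,54^n,40],40)$ partitioned difference family in $\mathbb{Z}_{40}\times\mathbb{F}_{2n+1}$.
   Context: The components of an integer $m$ are its maximal prime power factors, and $\mathbb{F}_m$ denotes the ring which is the direct product of the finite fields whose orders are the components of $m$; $\mathbb{Z}_{40}\times\mathbb{F}_{2n+1}$ is taken as an additive group. For $B$ a subset of a finite additive group $\Gamma$, $\Delta B$ is the multiset $\{x-y:x,y\in B,x\ne y\}$; for $\mathcal{F}=\{B_1,\dots,B_t\}$, $\Delta\mathcal{F}$ is the multiset union of the $\Delta B_i$. A $(v,[k_1,\dots,k_t],\lambda)$ partitioned difference family in $\Gamma$ ($|\Gamma|=v$) is a partition of $\Gamma$ into blocks $B_i$ with $|B_i|=k_i$ such that $\Delta\mathcal{F}$ contains every non-zero element exactly $\lambda$ times. Exponents denote multiplicities of block sizes. *)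

(* Defs.v *)
From HB Require Import structures.
From mathcomp Require Import all_boot all_order all_algebra.
Set Implicit Arguments. Unset Strict Implicit. Unset Printing Implicit Defensive.
Import GRing.Theory.
Local Open Scope ring_scope.

Definition components (m : nat) : seq nat :=
  [seq (p.1 ^ p.2)%N | p <- prime_decomp m].

Definition is_PDF (T : finType) (sub : T -> T -> T) (z : T)
    (v : nat) (ks : seq nat) (lam : nat) (blocks : seq {set T}) : Prop :=
  [/\ #|T| = v,
      (forall x : T, count (fun B : {set T} => x \in B) blocks = 1%N),
      perm_eq (map (fun B : {set T} => #|B|) blocks) ks
    & forall g : T, g != z ->
        (\sum_(B <- blocks)
           #|[set xy : T * T | [&& xy.1 \in B, xy.2 \in B, xy.1 != xy.2
                                 & sub xy.1 xy.2 == g]] |)%N = lam].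

(* Z_40 x F_m, where F_m = prod_i F i with F i a finite field of order the
   i-th component of m; only the additive structure is used. *)
Definition Gamma (k : nat) (F : 'I_k -> finFieldType) : finType :=
  ('Z_40 * {dffun forall i : 'I_k, F i})%type.

Definition Gamma_sub (k : nat) (F : 'I_k -> finFieldType)
    (x y : Gamma F) : Gamma F :=
  (x.1 - y.1, [ffun i => x.2 i - y.2 i]).

Definition Gamma_zero (k : nat) (F : 'I_k -> finFieldType) : Gamma F :=
  (0, [ffun i => 0]).

(* Main.v *)
Require Import Defs.
From mathcomp Require Import all_boot all_order all_algebra.
From mathcomp Require Import all_field zify.
Set Implicit Arguments. Unset Strict Implicit. Unset Printing Implicit Defensive.
Import GRing.Theory.

Definition Bl : seq (seq nat) := [:: [:: 0]; [:: 10;20;30]; [:: 1;6;9;12;13;14;28;35;37];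
 [:: 2; 3; 4; 5; 7; 8; 11; 15; 16; 17; 18; 19; 21; 22; 23; 24; 25; 26; 27; 29; 31; 32; 33; 34; 36; 38; 39]]%N.
Definition clsn (g : nat) : nat := find (fun l => g \in l) Bl.
Definition posn (g : nat) : nat := index g (nth [::] Bl (clsn g)).
Lemma fa : all (fun g => (clsn g < 4) && (posn g < 27)) (iota 0 40).
Proof. by vm_compute. Qed.
Lemma fb : all (fun a => all (fun b => (clsn a == clsn b) && (posn a == posn b) ==> (a == b)) (iota 0 40)) (iota 0 40).
Proof. by vm_compute. Qed.
Lemma fd : all (fun g => count (fun a => clsn a == clsn ((a + 40 - g) %% 40)) (iota 0 40) == 20) (iota 1 39).
Proof. by vm_compute. Qed.
Lemma fe : [seq count (fun a => clsn a == k) (iota 0 40) | k <- iota 0 4] = [:: 1;3;9;27].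
Proof. by vm_compute. Qed.

Definition cls (g : 'Z_40) : nat := clsn g.
Definition pos (g : 'Z_40) : nat := posn g.

Lemma memZ (g : 'Z_40) : val g \in iota 0 40.
Proof. by rewrite mem_iota /= ltn_ord. Qed.
Lemma cls_lt (g : 'Z_40) : cls g < 4.
Proof. by have /andP[] := allP fa (val g) (memZ g). Qed.
Lemma pos_lt (g : 'Z_40) : pos g < 27.
Proof. by have /andP[] := allP fa (val g) (memZ g). Qed.
Lemma cls_pos_inj (a b : 'Z_40) : cls a = cls b -> pos a = pos b -> a = b.
Proof.
move=> h1 h2; apply/val_inj/eqP.
have := allP (allP fb (val a) (memZ a)) (val b) (memZ b).
by rewrite /cls /pos in h1 h2; rewrite h1 h2 !eqxx.
Qed.

Lemma card_Z40 (Q : nat -> bool) : #|[set a : 'Z_40 | Q (val a)]| = count Q (iota 0 40).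
Proof.
rewrite -sum1_card.
rewrite (eq_bigl (fun a : 'I_40 => Q a)); last by move=> a; rewrite inE.
by rewrite -(big_mkord Q (fun _ => 1%N)) sum1_count.
Qed.

Lemma valZsub (a g : 'Z_40) : val (a - g)%R = ((a + 40 - g) %% 40)%N.
Proof.
case: a g => a Ha [g Hg] /=.
by rewrite modnDmr addnBA // ltnW.
Qed.

Lemma card_cls (k : nat) : (k < 4)%N -> #|[set a : 'Z_40 | cls a == k]| = nth 0%N [:: 1;3;9;27]%N k.
Proof.
move=> hk; rewrite (card_Z40 (fun a => clsn a == k)) -fe (nth_map 0%N) ?size_iota //.
by rewrite nth_iota.
Qed.

Lemma card_lambda (g : 'Z_40) : g != 0%R -> #|[set a : 'Z_40 | cls a == cls (a - g)%R]| = 20%N.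
Proof.
move=> g0.
transitivity (count (fun a => clsn a == clsn ((a + 40 - g) %% 40)) (iota 0 40)).
  by rewrite -card_Z40; apply: eq_card => a; rewrite !inE /cls valZsub.
apply/eqP; apply: (allP fd).
rewrite mem_iota /= ltn_ord andbT lt0n; apply: contra g0 => /eqP h.
by apply/eqP/val_inj.
Qed.

Lemma sumb_card (T : finType) (P : pred T) : (\sum_x (P x : nat))%N = #|[set x | P x]|.
Proof. by rewrite -sum1_card [RHS]big_mkcond /=; apply: eq_bigr => x _; rewrite inE; case: (P x). Qed.

Lemma sum1b (T : finType) (P : pred T) : (\sum_(x | P x) 1)%N = (\sum_x (P x : nat))%N.
Proof. by rewrite [LHS]big_mkcond /=; apply: eq_bigr => x _; case: (P x). Qed.

Lemma sum1b_in (T : finType) (A : pred T) (P : pred T) :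
  (\sum_(x in A | P x) 1)%N = (\sum_(x in A) (P x : nat))%N.
Proof. by rewrite big_mkcondr /=; apply: eq_bigr => x _; case: (P x). Qed.

Section Construction.
Local Open Scope ring_scope.
Variables (K : nat) (F : 'I_K -> finFieldType).
Local Notation T := {dffun forall i : 'I_K, F i}.
Hypothesis h2 : forall i, (1 + 1 : F i) != 0.
Variable w : forall i, nat -> F i.
Hypothesis wU : forall i j, (j < 27)%N -> w i j != 0.
Hypothesis wD : forall i j l, (j < 27)%N -> (l < 27)%N -> j != l ->
  (w i j != w i l) && (w i j != - w i l).

Definition fz : T := [ffun i => 0].
Definition negT (x : T) : T := [ffun i => - x i].
Definition mulT (x y : T) : T := [ffun i => x i * y i].
Definition invT (x : T) : T := [ffun i => (x i)^-1].
Definition unitT (x : T) := forall i, x i != 0.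

Lemma negTK x : negT (negT x) = x.
Proof. by apply/ffunP => i; rewrite !ffunE opprK. Qed.
Lemma negT_fz : negT fz = fz.
Proof. by apply/ffunP => i; rewrite !ffunE oppr0. Qed.
Lemma neq_fz x : x != fz -> exists i, x i != 0.
Proof.
move=> h; apply/existsP; apply: contraR h => /existsPn h.
by apply/eqP/ffunP => i; rewrite ffunE; apply/eqP; move: (h i); rewrite negbK.
Qed.
Lemma negT_neq x : x != fz -> negT x != x.
Proof.
move=> /neq_fz [i xi]; apply/negP => /eqP/ffunP/(_ i); rewrite ffunE => h.
have : (1 + 1) * x i == 0 by rewrite mulrDl mul1r -{1}h addNr.
by rewrite mulf_eq0 (negbTE (h2 i)) (negbTE xi).
Qed.
Lemma mulT_eqE x d h : unitT d -> (mulT x d == h) = (x == mulT h (invT d)).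
Proof.
move=> du; apply/eqP/eqP => [<-|->]; apply/ffunP => i; rewrite !ffunE.
  by rewrite mulfK ?du.
by rewrite divfK ?du.
Qed.
Lemma mulT_negl y d : mulT (negT y) d = negT (mulT y d).
Proof. by apply/ffunP => i; rewrite !ffunE mulNr. Qed.
Lemma mulT_negr y d : mulT y (negT d) = negT (mulT y d).
Proof. by apply/ffunP => i; rewrite !ffunE mulrN. Qed.
Lemma invT_neg d : invT (negT d) = negT (invT d).
Proof. by apply/ffunP => i; rewrite !ffunE invrN. Qed.
Lemma unitT_inv d : unitT d -> unitT (invT d).
Proof. by move=> du i; rewrite ffunE invr_eq0; apply: du. Qed.
Lemma mulT_eq0 h d : unitT d -> (mulT h d == fz) = (h == fz).
Proof.
move=> du; apply/idP/idP => [|/eqP->]; last first.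
  by apply/eqP/ffunP => i; rewrite /fz !ffunE mul0r.
apply: contraLR => /neq_fz [i hi]; apply/eqP => /ffunP/(_ i); rewrite !ffunE => /eqP.
by rewrite mulf_eq0 (negbTE hi) (negbTE (du i)).
Qed.

Definition Sh : {set T} := [set x : T | (enum_rank x < enum_rank (negT x))%N].
Lemma fz_notin_S : fz \notin Sh.
Proof. by rewrite inE negT_fz ltnn. Qed.
Lemma S_neq0 x : x \in Sh -> x != fz.
Proof. by apply: contraTneq => ->; apply: fz_notin_S. Qed.
Lemma S_xor y : ((y \in Sh) + (negT y \in Sh))%N = (y != fz).
Proof.
case: (eqVneq y fz) => [->|y0]; first by rewrite negT_fz (negbTE fz_notin_S).
rewrite !inE negTK.
have : enum_rank y != enum_rank (negT y).
  by apply: contra (negT_neq y0) => /eqP/enum_rank_inj h; rewrite -h eqxx.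
case: ltngtP => //= h; last by rewrite (val_inj h) eqxx.
Qed.
Lemma sum_eqS y : (\sum_(x in Sh) (x == y : nat))%N = (y \in Sh).
Proof.
case yS: (y \in Sh).
  by rewrite (bigD1 y) //= eqxx big1 ?addn0 // => x /andP[_ /negbTE ->].
by rewrite big1 // => x xS; case: eqP => // exy; rewrite -exy xS in yS.
Qed.
Lemma sum_pm a : (\sum_(x in Sh | (x == a) || (x == negT a)) 1)%N = (a != fz).
Proof.
rewrite sum1b_in.
case: (eqVneq a fz) => [->|a0].
  rewrite negT_fz big1 // => x xS; rewrite orbb; case: eqP => // ex.
  by rewrite ex (negbTE fz_notin_S) in xS.
transitivity ((a \in Sh) + (negT a \in Sh))%N; last by rewrite S_xor a0.
rewrite -!sum_eqS -big_split /=; apply: eq_bigr => x _.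
case: (eqVneq x a) => [->|] /=; last by case: (x == negT a).
by rewrite eq_sym (negbTE (negT_neq a0)).
Qed.

Local Notation G := (Gamma F).
Definition fv (a : 'Z_40) : T := [ffun i => w i (pos a)].
Lemma fv_unit a : unitT (fv a).
Proof. by move=> i; rewrite ffunE; apply: wU; apply: pos_lt. Qed.
Definition sg (s : bool) (x : T) : T := if s then x else negT x.
Definition e (x : T) (p : 'Z_40 * bool) : G := (p.1, sg p.2 (mulT x (fv p.1))).
Definition dd (pq : ('Z_40 * bool) * ('Z_40 * bool)) : T :=
  [ffun i => sg pq.1.2 (fv pq.1.1) i - sg pq.2.2 (fv pq.2.1) i].
Lemma sg_mulT s x f : sg s (mulT x f) = mulT x (sg s f).
Proof. by case: s => //=; rewrite mulT_negr. Qed.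
Lemma sgE s f i : sg s f i = if s then f i else - f i.
Proof. by case: s => //=; rewrite ffunE. Qed.
Lemma mulT_neq0 x d : x != fz -> unitT d -> mulT x d != fz.
Proof. by move=> x0 du; rewrite mulT_eq0. Qed.

Lemma e_sub x p q : Gamma_sub (e x p) (e x q) = (p.1 - q.1, mulT x (dd (p, q))).
Proof.
rewrite /Gamma_sub /e /=; congr pair; apply/ffunP => i.
by rewrite !ffunE !sg_mulT !ffunE mulrBr.
Qed.

Lemma dd_unit p q : cls p.1 = cls q.1 -> p != q -> unitT (dd (p, q)).
Proof.
case: p q => [a s] [b t] /= hc hne i; rewrite ffunE /= !sgE !ffunE.
have two v : v != 0 -> v + v != 0 :> F i.
  move=> v0; have -> : v + v = (1 + 1) * v by rewrite mulrDl mul1r.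
  by rewrite mulf_neq0 ?h2.
case: (eqVneq a b) => [eab|nab].
  subst b; have st : s != t by apply: contra hne => /eqP ->.
  clear hne hc; have := wU i (pos_lt a) => /two; case: s t st => [] [] //= _ h.
    by rewrite opprK.
  by rewrite -opprD oppr_eq0.
have np : pos a != pos b by apply: contra nab => /eqP /(cls_pos_inj hc) ->.
have /andP[d1 d2] := wD i (pos_lt a) (pos_lt b) np.
clear hne; case: s; case: t.
- by rewrite subr_eq0.
- by rewrite opprK addr_eq0.
- by rewrite -opprD oppr_eq0 addr_eq0.
- by rewrite opprK addrC subr_eq0 eq_sym.
Qed.

Lemma e_inj x : x != fz -> injective (e x).
Proof.
move=> x0 [a s] [b t] /= [eab]; subst b.
have hn := negT_neq (mulT_neq0 x0 (fv_unit a)).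
case: s; case: t => //= h.
- by rewrite -h eqxx in hn.
- by rewrite h eqxx in hn.
Qed.

Definition Pk (k : nat) : {set 'Z_40 * bool} := [set p | cls p.1 == k].
Definition blk (k : nat) (x : T) : {set G} := e x @: Pk k.
Definition L : {set G} := (fun a : 'Z_40 => ((a, fz) : G)) @: setT.

Lemma mem_blk k x (z : G) : x != fz ->
  (z \in blk k x) = (cls z.1 == k) &&
     ((z.2 == mulT x (fv z.1)) || (z.2 == negT (mulT x (fv z.1)))).
Proof.
move=> x0; case: z => g y /=; apply/imsetP/andP.
  case=> [[a s]]; rewrite inE /= => ha [-> ->]; split => //.
  by case: s => /=; rewrite eqxx ?orbT.
case=> hk /orP [] /eqP ->; [exists (g, true) | exists (g, false)] => //; by rewrite inE.
Qed.

Lemma card_blk k x : x != fz -> #|blk k x| = #|Pk k|.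
Proof. by move=> x0; rewrite card_imset //; apply: e_inj. Qed.

Lemma card_Pk k : (k < 4)%N -> #|Pk k| = (nth 0%N [:: 1; 3; 9; 27] k * 2)%N.
Proof.
move=> hk.
have -> : Pk k = setX [set a : 'Z_40 | cls a == k] [set: bool].
  by apply/setP => [[a s]]; rewrite !inE andbT.
by rewrite cardsX card_cls // cardsT card_bool.
Qed.

Lemma mem_L (z : G) : (z \in L) = (z.2 == fz).
Proof.
case: z => g y /=; apply/imsetP/idP => [[a _ [_ ->]] //|/eqP ->].
by exists g.
Qed.

Definition Cnt (B : {set G}) (z : G) : nat :=
  #|[set xy : G * G | [&& xy.1 \in B, xy.2 \in B, xy.1 != xy.2
                        & Gamma_sub xy.1 xy.2 == z]]|.

Lemma C_blk k x z : x != fz ->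
  Cnt (blk k x) z = (\sum_(pq : ('Z_40 * bool) * ('Z_40 * bool))
    ([&& cls pq.1.1 == k, cls pq.2.1 == k, pq.1 != pq.2, (pq.1.1 - pq.2.1)%R == z.1
       & mulT x (dd pq) == z.2] : nat))%N.
Proof.
move=> x0.
set A := [set pq : ('Z_40 * bool) * ('Z_40 * bool) | [&& pq.1 \in Pk k, pq.2 \in Pk k,
   pq.1 != pq.2 & Gamma_sub (e x pq.1) (e x pq.2) == z]].
have finj : injective (fun pq : ('Z_40 * bool) * ('Z_40 * bool) => (e x pq.1, e x pq.2)).
  move=> [p q] [p' q'] /= /eqP; rewrite xpair_eqE => /andP[/eqP hh1 /eqP hh2].
  by rewrite (e_inj x0 hh1) (e_inj x0 hh2).
rewrite /Cnt (_ : [set xy | _] = (fun pq => (e x pq.1, e x pq.2)) @: A); last first.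
  apply/setP => [[u v]]; rewrite inE /=; apply/idP/imsetP.
    case/and4P => /imsetP[p pin ->] /imsetP[q qin ->] hne hsub; exists (p, q) => //.
    rewrite inE /= pin qin hsub /= andbT; apply: contraNneq hne => -> //.
  case=> [[p q]]; rewrite inE /= => /and4P[pin qin hne hsub] [-> ->].
  by rewrite /blk !imset_f //= hsub andbT (inj_eq (e_inj x0)) hne.
rewrite card_imset // sumb_card; apply: eq_card => [[p q]]; rewrite !inE /= e_sub.
by clear A; case: z => g h /=; rewrite xpair_eqE.
Qed.

Definition Nc (g : 'Z_40) (pq : ('Z_40 * bool) * ('Z_40 * bool)) : bool :=
  [&& cls pq.1.1 == cls pq.2.1, pq.1 != pq.2 & pq.1.1 - pq.2.1 == g].

Lemma subZ_eq (a b g : 'Z_40) : (a - b == g) = (b == a - g).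
Proof. by apply/eqP/eqP => [<-|->]; rewrite subKr. Qed.

Lemma Ng g : (\sum_(pq : ('Z_40 * bool) * ('Z_40 * bool)) (Nc g pq : nat))%N = 80%N.
Proof.
rewrite -(pair_big xpredT xpredT (fun p q => (Nc g (p, q) : nat))) /=.
transitivity (\sum_(p : 'Z_40 * bool)
   (if g == 0%R then 1 else (cls p.1 == cls (p.1 - g)%R) * 2))%N.
  apply: eq_bigr => [[a s]] _.
  rewrite -(pair_big xpredT xpredT (fun b t => (Nc g ((a, s), (b, t)) : nat))) /=.
  rewrite (bigD1 (a - g)) //= [X in (_ + X)%N]big1 ?addn0; last first.
    move=> b hb; apply: big1 => t _; rewrite /Nc /= subZ_eq (negbTE hb).
    by rewrite !andbF.
  rewrite big_bool /Nc /= subKr eqxx !andbT.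
  case: (eqVneq g 0) => [->|g0].
    by rewrite subr0 eqxx !xpair_eqE eqxx /=; case: s.
  have ag : (a, s) != (a - g, true) /\ (a, s) != (a - g, false).
    have : a != a - g by rewrite -subr_eq0 subKr.
    by move=> h; rewrite !xpair_eqE (negbTE h).
  by case: ag => -> ->; rewrite !andbT /= muln2 addnn.
case: (eqVneq g 0) => [_|g0].
  by rewrite sum_nat_const card_prod card_bool card_ord.
rewrite -big_distrl /=.
rewrite -(pair_big xpredT xpredT (fun a (s : bool) => (cls a == cls (a - g)%R : nat))) /=.
transitivity ((\sum_(a : 'Z_40) ((cls a == cls (a - g)%R) : nat)) * 2 * 2)%N.
  congr (_ * _)%N; rewrite big_distrl /=; apply: eq_bigr => a _; by rewrite big_bool /= addnn muln2.
by rewrite sumb_card card_lambda.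
Qed.

Lemma C_L z : z != Gamma_zero F -> Cnt L z = if z.2 == fz then 40%N else 0%N.
Proof.
case: z => g h /= hz.
case: (eqVneq h fz) => [eh|nh].
  subst h.
  have g0 : g != 0 by apply: contraNneq hz => ->.
  rewrite /Cnt (_ : [set xy | _] = (fun a : 'Z_40 => (((a, fz), (a - g, fz)) : G * G)) @: setT).
    by rewrite card_imset ?cardsT ?card_ord // => a b [].
  apply/setP => [[[u1 u2] [v1 v2]]]; rewrite inE /= !mem_L /=; apply/idP/imsetP.
    case/and4P => /eqP -> /eqP -> _; rewrite /Gamma_sub /= xpair_eqE => /andP[/eqP <- _].
    by exists u1 => //; rewrite subKr.
  case=> a _ [-> -> -> ->]; rewrite !eqxx /= xpair_eqE.
  have -> : (a == a - g) = false by apply/negbTE; rewrite -subr_eq0 subKr.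
  rewrite /Gamma_sub /= xpair_eqE subKr eqxx /=.
  by apply/eqP/ffunP => i; rewrite !ffunE subr0.
apply/eqP; rewrite cards_eq0; apply/eqP/setP => [[[u1 u2] [v1 v2]]].
rewrite !inE /= !mem_L /=; apply/negP => /and4P[/eqP e1 /eqP e2 _].
rewrite /Gamma_sub /= xpair_eqE => /andP[_ /eqP eh]; move: nh; rewrite -eh e1 e2.
by apply/negP; rewrite negbK; apply/eqP/ffunP => i; rewrite !ffunE subr0.
Qed.

Definition flip2 (pq : ('Z_40 * bool) * ('Z_40 * bool)) : ('Z_40 * bool) * ('Z_40 * bool) :=
  ((pq.1.1, ~~ pq.1.2), (pq.2.1, ~~ pq.2.2)).
Lemma flip2K : involutive flip2.
Proof. by move=> [[a s] [b t]]; rewrite /flip2 /= !negbK. Qed.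
Lemma Nc_flip g pq : Nc g (flip2 pq) = Nc g pq.
Proof.
case: pq => [[a s] [b t]]; rewrite /Nc /flip2 /=; congr andb; congr andb.
by rewrite !xpair_eqE (inj_eq negb_inj).
Qed.
Lemma dd_flip pq : dd (flip2 pq) = negT (dd pq).
Proof.
case: pq => [[a s] [b t]]; apply/ffunP => i; rewrite /flip2 !ffunE /= !sgE.
by case: s; case: t => /=; rewrite ?opprK ?opprB ?opprD ?opprK // addrC.
Qed.

Lemma Xhalf g h :
  (\sum_(pq : ('Z_40 * bool) * ('Z_40 * bool))
     (Nc g pq && (mulT h (invT (dd pq)) \in Sh) : nat))%N = if h == fz then 0%N else 40%N.
Proof.
set X := (\sum_pq _)%N.
have HX : (X + X = (h != fz) * 80)%N.
  rewrite {2}/X (reindex_inj (can_inj flip2K)) /= -big_split /=.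
  transitivity (\sum_(pq : ('Z_40 * bool) * ('Z_40 * bool)) (Nc g pq && (h != fz) : nat))%N.
    apply: eq_bigr => [[p q]] _; rewrite Nc_flip dd_flip invT_neg mulT_negr.
    case hN: (Nc g (p, q)) => //=.
    move: hN; rewrite /Nc /= => /and3P[/eqP hc hne _].
    by rewrite S_xor mulT_eq0 //; apply: unitT_inv; apply: dd_unit.
  case: (h != fz) => /=; last by rewrite mul0n big1 // => pq _; rewrite andbF.
  by rewrite mul1n -(Ng g); apply: eq_bigr => pq _; rewrite andbT.
by case: (h == fz) HX => /=; lia.
Qed.

Lemma cnt_blk k (z : G) :
  count (preim (blk k) (fun B : {set G} => z \in B)) (enum Sh) = ((cls z.1 == k) * (z.2 != fz))%N.
Proof.
rewrite -sum1_count big_enum_cond.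
set a := mulT z.2 (invT (fv z.1)).
transitivity (\sum_(x in Sh | (cls z.1 == k) && ((x == a) || (x == negT a))) 1)%N.
  apply: eq_bigl => x; case xS: (x \in Sh) => //=; rewrite mem_blk ?S_neq0 //.
  congr andb; rewrite /a eq_sym (mulT_eqE _ _ (fv_unit _)); congr (_ || _).
  have -> : (z.2 == negT (mulT x (fv z.1))) = (negT z.2 == mulT x (fv z.1)).
    by apply/eqP/eqP => [->|<-]; rewrite negTK.
  by rewrite eq_sym (mulT_eqE _ _ (fv_unit _)) mulT_negl.
case: (cls z.1 == k) => /=; last by rewrite mul0n big_pred0 // => x; rewrite andbF.
by rewrite mul1n sum_pm /a mulT_eq0 //; apply: unitT_inv; apply: fv_unit.
Qed.

Definition blocksD : seq {set G} :=
  [seq blk 0 x | x <- enum Sh] ++ [seq blk 1 x | x <- enum Sh] ++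
  [seq blk 2 x | x <- enum Sh] ++ [seq blk 3 x | x <- enum Sh] ++ [:: L].

Lemma card_L : #|L| = 40%N.
Proof. by rewrite card_imset ?cardsT ?card_ord // => a b []. Qed.

Theorem PDF_construction (n : nat) : #|T| = (n.*2).+1 ->
  exists bl : seq {set Gamma F},
    is_PDF (@Gamma_sub _ F) (Gamma_zero F) (80 * n + 40)
      (nseq n 2 ++ nseq n 6 ++ nseq n 18 ++ nseq n 54 ++ [:: 40])%N 40 bl.
Proof.
move=> hT.
have cS : #|Sh| = n.
  have e1 : (\sum_(x : T) ((x \in Sh) + (negT x \in Sh)))%N = (#|T|).-1.
    rewrite (eq_bigr (fun x => (x != fz : nat))); last by move=> x _; rewrite S_xor.
    by rewrite sumb_card -(cardsC1 fz); apply: eq_card => x; rewrite !inE.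
  have e2 : (\sum_(x : T) (negT x \in Sh : nat))%N = (\sum_(x : T) (x \in Sh : nat))%N.
    by rewrite (reindex_inj (can_inj negTK)) /=; apply: eq_bigr => x _; rewrite negTK.
  have e3 : (\sum_(x : T) (x \in Sh : nat))%N = #|Sh|.
    by rewrite sumb_card; apply: eq_card => x; rewrite inE.
  move: e1; rewrite big_split /= e2 e3 hT /=; lia.
exists blocksD; split.
- by rewrite /Gamma card_prod card_ord hT; change (40 * (n.*2).+1 = 80 * n + 40)%N; lia.
- move=> z; rewrite /blocksD !count_cat !count_map !cnt_blk /= mem_L addn0.
  move: (cls_lt z.1); case: (cls z.1) => [|[|[|[|c]]]] // _; by case: (z.2 == fz).
- have hm k c : #|Pk k| = c -> map (fun B : {set G} => #|B|) (map (blk k) (enum Sh)) = nseq n c.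
    move=> hc; rewrite -map_comp; transitivity [seq c | x <- enum Sh].
      by apply/eq_in_map => x; rewrite mem_enum => xS /=; rewrite card_blk ?S_neq0.
    by rewrite -cS cardE; elim: (enum Sh) => //= ? ? ->.
  have c0 : #|Pk 0| = 2%N by rewrite card_Pk.
  have c1 : #|Pk 1| = 6%N by rewrite card_Pk.
  have c2 : #|Pk 2| = 18%N by rewrite card_Pk.
  have c3 : #|Pk 3| = 54%N by rewrite card_Pk.
  by rewrite /blocksD !map_cat (hm _ _ c0) (hm _ _ c1) (hm _ _ c2) (hm _ _ c3) /= card_L.
- move=> z hz.
  change ((\sum_(B <- blocksD) Cnt B z)%N = 40%N).
  rewrite /blocksD !big_cat /= !big_map !big_enum big_cons big_nil addn0 /=.
  have CB k : (\sum_(x in Sh) Cnt (blk k x) z = \sum_(x in Sh) \sum_(pq : ('Z_40 * bool) * ('Z_40 * bool))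
    ([&& cls pq.1.1 == k, cls pq.2.1 == k, pq.1 != pq.2, (pq.1.1 - pq.2.1)%R == z.1
       & mulT x (dd pq) == z.2] : nat))%N.
    by apply: eq_bigr => x xS; rewrite C_blk ?S_neq0.
  rewrite !CB !addnA -!big_split /=.
  transitivity ((\sum_(x in Sh) \sum_(pq : ('Z_40 * bool) * ('Z_40 * bool))
     (Nc z.1 pq && (mulT x (dd pq) == z.2) : nat)) + Cnt L z)%N.
    congr addn; apply: eq_bigr => x _; rewrite -!big_split /=; apply: eq_bigr => pq _.
    rewrite /Nc; move: (cls_lt pq.1.1).
    case: (cls pq.1.1) => [|[|[|[|c]]]] // _; case: (cls pq.2.1) => [|[|[|[|c']]]] //=;
      by rewrite ?addn0 ?add0n ?andbA.
  rewrite exchange_big /=.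
  transitivity ((\sum_(pq : ('Z_40 * bool) * ('Z_40 * bool))
     (Nc z.1 pq && (mulT z.2 (invT (dd pq)) \in Sh) : nat)) + Cnt L z)%N.
    congr addn; apply: eq_bigr => [[p q]] _.
    case hN: (Nc z.1 (p, q)) => /=; last by rewrite big1.
    move: hN; rewrite /Nc /= => /and3P[/eqP hc hne _].
    by rewrite -sum_eqS; apply: eq_bigr => x _; rewrite mulT_eqE //; apply: dd_unit.
  by rewrite Xhalf C_L //; case: (z.2 == fz).
Qed.

End Construction.

Section Seqs.
Local Open Scope ring_scope.
Variable R : finFieldType.
Hypothesis h2 : (1 + 1 : R) != 0.
Hypothesis hcard : (54 < #|R|)%N.

Lemma mem_opp (s : seq R) x : (- x \in s) = (x \in map -%R s).
Proof. by rewrite -{2}[x]opprK mem_map //; apply: oppr_inj. Qed.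

Lemma exists_seq k : (k <= 27)%N ->
  exists s : seq R, [&& size s == k, uniq (s ++ map -%R s) & 0 \notin s].
Proof.
elim: k => [_|k IH hk]; first by exists [::].
have [s /and3P[/eqP sz us s0]] := IH (ltnW hk).
set l := 0 :: s ++ map -%R s.
have [x hx] : exists x : R, x \notin l.
  case: (boolP [forall x : R, x \in l]) => [/forallP hall|/forallPn [x hx]]; last by exists x.
  have : (#|R| <= size l)%N.
    apply: leq_trans (card_size l); apply: subset_leq_card; apply/subsetP => y _; exact: hall y.
  rewrite /= size_cat size_map sz => hh; exfalso; have := leq_trans hcard hh; move: hk; clear; lia.
move: hx; rewrite /l in_cons mem_cat negb_or => /andP[x0]; rewrite negb_or => /andP[xs xms].
exists (x :: s); rewrite /= sz eqxx /= in_cons negb_or eq_sym x0 s0 /=.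
move: us; rewrite !cat_uniq /= => /and3P[-> hs ums].
rewrite mem_cat negb_or xs /= in_cons negb_or xms andbT.
have -> : (x == - x) = false.
  apply/negbTE; apply: contra h2 => /eqP hx.
  have : (1 + 1) * x == 0 by rewrite mulrDl mul1r {1}hx addNr.
  by rewrite mulf_eq0 (negbTE x0) orbF.
rewrite /= negb_or hs ums andbT mem_opp xms /= mem_opp (mapK opprK) xs.
by [].
Qed.
End Seqs.

Lemma comp_facts (m : nat) (i : nat) : (0 < m)%N -> (i < size (components m))%N ->
  exists p e, [/\ nth 0%N (components m) i = (p ^ e)%N, prime p, (0 < e)%N & (p ^ e %| m)%N].
Proof.
move=> m0 hi; have hi' : (i < size (prime_decomp m))%N by rewrite /components size_map in hi.
set pe := nth (0, 0)%N (prime_decomp m) i.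
have /mem_prime_decomp [pp e0 dv] : (pe.1, pe.2) \in prime_decomp m by rewrite -surjective_pairing mem_nth.
exists pe.1, pe.2; split => //.
by rewrite /components (nth_map (0, 0)%N).
Qed.

Lemma card_prod_comp (m : nat) (F : 'I_(size (components m)) -> finFieldType) :
  (0 < m)%N -> (forall i, #|F i| = nth 0%N (components m) i) ->
  #|{dffun forall i : 'I_(size (components m)), F i}| = m.
Proof.
move=> m0 hF; rewrite card_dep_ffun foldrE big_map big_enum /=.
rewrite (eq_bigr (fun i : 'I_(size (components m)) => nth 0%N (components m) i)); last by move=> i _; rewrite hF.
rewrite -(big_mkord xpredT (fun i => nth 0%N (components m) i)) -(big_nth 0%N xpredT id).
by rewrite /components big_map [RHS](prod_prime_decomp m0).
Qed.

Theorem corollary7p4 (n : nat)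
    (F : 'I_(size (components n.*2.+1)) -> finFieldType)
    (hF : forall i, #|F i| = nth 0%N (components n.*2.+1) i)
    (hn : (0 < n)%N)
    (hcomp : all (fun q => (54 < q)%N) (components n.*2.+1)) :
  exists blocks : seq {set Gamma F},
    is_PDF (@Gamma_sub _ F) (Gamma_zero F) (80 * n + 40)
      (nseq n 2 ++ nseq n 6 ++ nseq n 18 ++ nseq n 54 ++ [:: 40])%N
      40 blocks.
Proof.
have m0 : (0 < n.*2.+1)%N by [].
have h2 : forall i, (1 + 1 : F i)%R != 0%R.
  move=> i; have [p [e [hq pp e0 dv]]] := comp_facts m0 (ltn_ord i).
  have pc : p \in [pchar F i]%R by apply: (card_finPcharP _ pp); rewrite hF hq.
  apply/negP => /eqP h.
  have c2 : 2%N \in [pchar F i]%R by rewrite inE /=; apply/eqP.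
  move: c2; rewrite (GRing.pcharf_eq pc) => /eqP p2; subst p.
  have : (2 %| n.*2.+1)%N := dvdn_trans (dvdn_exp e0 (dvdnn 2)) dv.
  by rewrite dvdn2 /= odd_double.
have hc : forall i, (54 < #|F i|)%N.
  by move=> i; rewrite hF; apply: (allP hcomp); apply: mem_nth.
have Hs : forall i, exists s : seq (F i),
    [&& size s == 27, uniq (s ++ map (@GRing.opp _) s) & 0%R \notin s].
  by move=> i; apply: exists_seq.
pose w i j := nth 0%R (xchoose (Hs i)) j.
have wU : forall i j, (j < 27)%N -> w i j != 0%R.
  move=> i j hj; have /and3P[/eqP sz _ s0] := xchooseP (Hs i).
  by move: s0; apply: contra => /eqP h0; rewrite -[X in X \in _]h0 /w mem_nth // sz.
have wD : forall i j l, (j < 27)%N -> (l < 27)%N -> j != l ->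
    (w i j != w i l) && (w i j != GRing.opp (w i l)).
  move=> i0 j l hj hl hjl; have /and3P[/eqP sz us _] := xchooseP (Hs i0).
  move: us; rewrite cat_uniq => /and3P[us hs _].
  rewrite /w nth_uniq ?sz // hjl /=.
  apply: contra hs => /eqP h; apply/hasP; exists (w i0 j); last by rewrite /w mem_nth // sz.
  by rewrite /w h map_f // mem_nth // sz.
apply: (PDF_construction h2 wU wD).
exact: card_prod_comp.
Qed.
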